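(* Let $\tau>\frac{3+\sqrt{17}}{2}$. For Lebesgue-almost every $\gamma\in(0,\tfrac12)$ the following holds: for every $\alpha\in D_{\gamma,\tau}$ with convergents $p_n/q_n$, for all sufficiently large even $n$, $$\frac{p_n}{q_n}+\frac{\gamma}{q_n^{\tau+1}}<\frac{p_{n+2}}{q_{n+2}}-\frac{\gamma}{q_{n+2}^{\tau+1}} \iff \frac{p_n}{q_n}+\frac{\gamma}{q_n^{\tau+1}}<\frac{p_{n+2}}{q_{n+2}}-\frac{\gamma}{q_{n+2}^{\tau+1}}-\frac{2\gamma}{q_{n+2}^{\tau-1}}.$$
   Context: For $x\in\mathbb{R}$, $\|x\|:=\min_{p\in\mathbb{Z}}|x-p|$; $\mathbb{N}=\{1,2,\dots\}$. For $\gamma>0,\tau\ge1$, $D_{\gamma,\tau}:=\{\alpha\in(0,1): \|q\alpha\|\ge\gamma/q^\tau\ \forall q\in\mathbb{N}\}$; its elements are irrational. For irrational $\alpha\in(0,1)$ write $\alpha=\cfrac{1}{a_1+\cfrac{1}{a_2+\cdots}}$, and let $p_n/q_n$ ($n\ge0$) be its convergents: $p_{-1}=1,q_{-1}=0,p_0=0,q_0=1$, $p_n=a_np_{n-1}+p_{n-2}$, $q_n=a_nq_{n-1}+q_{n-2}$. *)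

(* Defs.v *)
From HB Require Import structures.
From mathcomp Require Import all_boot all_order all_algebra.
From mathcomp Require Import all_classical all_reals all_analysis.
Set Implicit Arguments. Unset Strict Implicit. Unset Printing Implicit Defensive.
Import Order.TTheory GRing.Theory Num.Theory.
Local Open Scope ring_scope.
Local Open Scope classical_set_scope.

Section Defs.
Variable R : realType.

(* ||x|| = min_{p in Z} |x - p| : the nearest integer is floor x or ceil x *)
Definition dist_int (x : R) : R :=
  Num.min (x - (Num.floor x)%:~R) ((Num.ceil x)%:~R - x).

Definition Dgt (gamma tau : R) : set R :=
  [set alpha | 0 < alpha < 1 /\
     forall q : nat, (0 < q)%N -> gamma / (q%:R `^ tau) <= dist_int (q%:R * alpha)].

Fixpoint cf_rem (alpha : R) (k : nat) : R :=
  match k with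
  | 0 => alpha
  | k'.+1 => let y := (cf_rem alpha k')^-1 in y - (Num.floor y)%:~R
  end.

(* partial quotients a_n = floor(1 / x_{n-1}), n >= 1 *)
Definition cf_a (alpha : R) (n : nat) : nat := Num.truncn ((cf_rem alpha n.-1)^-1).

(* cf_pq alpha n = ((p_{n-1}, q_{n-1}), (p_n, q_n)) *)
Fixpoint cf_pq (alpha : R) (n : nat) : (nat * nat) * (nat * nat) :=
  match n with
  | 0 => ((1%N, 0%N), (0%N, 1%N))
  | n'.+1 =>
      let: ((pm, qm), (p, q)) := cf_pq alpha n' in
      let a := cf_a alpha n in
      ((p, q), (a * p + pm, a * q + qm)%N)
  end.

Definition cf_p (alpha : R) (n : nat) : nat := (cf_pq alpha n).2.1.
Definition cf_q (alpha : R) (n : nat) : nat := (cf_pq alpha n).2.2.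

End Defs.

(* Main.v *)
Require Import Defs.
From HB Require Import structures.
From mathcomp Require Import all_boot all_order all_algebra.
From mathcomp Require Import all_classical all_reals all_analysis.
From mathcomp Require Import zify ring lra.
Import Order.TTheory GRing.Theory Num.Theory.
Local Open Scope ring_scope.
Local Open Scope classical_set_scope.

Section CF.
Variable R : realType.
Implicit Types alpha : R.

Lemma cf_rem_S alpha k : cf_rem alpha k.+1 =
  (cf_rem alpha k)^-1 - (Num.floor ((cf_rem alpha k)^-1))%:~R.
Proof. by []. Qed.

Lemma cf_rem_itv alpha k : 0 < alpha < 1 -> 0 <= cf_rem alpha k < 1.
Proof.
move=> /andP[a0 a1]; case: k => [|k]; first by rewrite /= ltW.
rewrite cf_rem_S; have := floor_itv ((cf_rem alpha k)^-1).
rewrite intrD /=; set y := _^-1; set f := _%:~R => /andP[h1 h2].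
apply/andP; split; lra.
Qed.

Lemma cf_rem0 alpha k : cf_rem alpha k = 0 -> cf_rem alpha k.+1 = 0.
Proof. by move=> h; rewrite cf_rem_S h invr0 floor0 subr0. Qed.

Lemma cf_rem0_le alpha k j : (k <= j)%N -> cf_rem alpha k = 0 -> cf_rem alpha j = 0.
Proof.
move=> /subnK <-; elim: (j - k)%N => [//|i IH] h.
by rewrite addSn cf_rem0 // IH.
Qed.

Lemma cf_a_ge1 alpha k : 0 < alpha < 1 -> cf_rem alpha k != 0 -> (1 <= cf_a alpha k.+1)%N.
Proof.
move=> ha hk; rewrite /cf_a /= truncn_gt0.
have /andP[h0 h1] := cf_rem_itv alpha k ha.
have hp : 0 < cf_rem alpha k by rewrite lt_def hk h0.
by rewrite ltW // invf_gt1.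
Qed.

Lemma cf_a0 alpha k : cf_rem alpha k = 0 -> cf_a alpha k.+1 = 0%N.
Proof. by move=> h; rewrite /cf_a /= h invr0 truncn0. Qed.

Lemma cf_p0 alpha : cf_p alpha 0 = 0%N. Proof. by []. Qed.
Lemma cf_q0 alpha : cf_q alpha 0 = 1%N. Proof. by []. Qed.
Lemma cf_p1 alpha : cf_p alpha 1 = 1%N.
Proof. by rewrite /cf_p /=; lia. Qed.
Lemma cf_q1 alpha : cf_q alpha 1 = cf_a alpha 1.
Proof. by rewrite /cf_q /=; lia. Qed.

Lemma cf_pq_S alpha k : cf_pq alpha k.+1 =
  ((cf_p alpha k, cf_q alpha k),
   (cf_a alpha k.+1 * cf_p alpha k + (cf_pq alpha k).1.1,
    cf_a alpha k.+1 * cf_q alpha k + (cf_pq alpha k).1.2)%N).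
Proof. by rewrite /cf_p /cf_q /=; case: (cf_pq alpha k) => [[? ?] [? ?]]. Qed.

Lemma cf_pSS alpha k : cf_p alpha k.+2 = (cf_a alpha k.+2 * cf_p alpha k.+1 + cf_p alpha k)%N.
Proof. by rewrite {1}/cf_p cf_pq_S cf_pq_S. Qed.
Lemma cf_qSS alpha k : cf_q alpha k.+2 = (cf_a alpha k.+2 * cf_q alpha k.+1 + cf_q alpha k)%N.
Proof. by rewrite {1}/cf_q cf_pq_S cf_pq_S. Qed.

Lemma cf_det alpha k :
  (cf_p alpha k.+1)%:R * (cf_q alpha k)%:R - (cf_p alpha k)%:R * (cf_q alpha k.+1)%:R
   = (-1) ^+ k :> R.
Proof.
elim: k => [|k IH]; first by rewrite cf_p1 cf_q0 cf_p0 /=; ring.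
rewrite cf_pSS cf_qSS !natrD !natrM exprS -IH. ring.
Qed.

Lemma cf_diff2 alpha n : ~~ odd n ->
  (cf_p alpha n.+2)%:R * (cf_q alpha n)%:R - (cf_p alpha n)%:R * (cf_q alpha n.+2)%:R
   = (cf_a alpha n.+2)%:R :> R.
Proof.
move=> ev; rewrite cf_pSS cf_qSS !natrD !natrM.
have := cf_det alpha n; rewrite -signr_odd (negbTE ev) expr0 => h.
transitivity ((cf_a alpha n.+2)%:R * ((cf_p alpha n.+1)%:R * (cf_q alpha n)%:R -
   (cf_p alpha n)%:R * (cf_q alpha n.+1)%:R) :> R); first ring.
by rewrite h mulr1.
Qed.

Lemma cf_q_grow alpha k : (forall j, (1 <= j <= k.+1)%N -> (1 <= cf_a alpha j)%N) ->
  (k <= cf_q alpha k)%N /\ (1 <= cf_q alpha k)%N /\ (k.+1 <= cf_q alpha k.+1)%N.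
Proof.
elim: k => [|k IH] h.
  rewrite cf_q0 cf_q1; split => //; split => //; apply: h => //.
have [h1 [h2 h3]] : (k <= cf_q alpha k)%N /\ (1 <= cf_q alpha k)%N /\ (k.+1 <= cf_q alpha k.+1)%N.
  by apply: IH => j /andP[j1 j2]; apply: h; rewrite j1 /=; lia.
have ha : (1 <= cf_a alpha k.+2)%N by apply: h; rewrite leqnn.
rewrite cf_qSS; split => //; split; first lia.
nia.
Qed.

End CF.

Lemma cf_a_all (R : realType) (alpha : R) n : 0 < alpha < 1 -> cf_a alpha n.+2 != 0%N ->
  forall j, (1 <= j <= n.+2)%N -> (1 <= cf_a alpha j)%N.
Proof.
move=> ha hn j /andP[j1 j2].
have hr : cf_rem alpha n.+1 != 0 by apply: contra hn => /eqP /cf_a0 ->.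
case: j j1 j2 => // j _ j2.
apply: cf_a_ge1 => //; apply: contra hr => /eqP h; apply/eqP; apply: cf_rem0_le h; lia.
Qed.

Set Implicit Arguments. Unset Strict Implicit. Unset Printing Implicit Defensive.

Section Tail.
Variable R : realType.

Lemma powR_expE (y e : R) : 0 < y -> y `^ e = expR (e * ln y).
Proof. by move=> y0; rewrite /powR gt_eqF. Qed.

Lemma pow_tele (b y : R) : 1 < b -> 1 < y ->
  y `^ (-b) <= ((y-1) `^ (1-b) - y `^ (1-b)) / (b-1).
Proof.
move=> b1 y1.
have y0 : 0 < y by lra.
have ym0 : 0 < y - 1 by lra.
have k0 : 0 < b - 1 by lra.
rewrite ler_pdivlMr // !powR_expE //.
set L := ln y; set L' := ln (y-1).
have HL : L' - L <= - y^-1.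
  rewrite /L /L' -ln_div ?posrE //.
  have -> : (y - 1) / y = 1 + (- y^-1) by rewrite mulrBl mul1r divff // gt_eqF.
  apply: le_ln1Dx. rewrite ltrNl opprK invf_lt1 //.
have eL : expR L = y by rewrite /L lnK ?posrE.
have e1 : expR ((1 - b) * L') = expR ((1-b) * L) * expR ((b-1) * (L - L')).
  by rewrite -expRD; congr expR; ring.
have e2 : expR (- b * L) = expR ((1-b) * L) / y.
  by rewrite -eL -expRB; congr expR; ring.
rewrite e1 e2.
have := expR_ge1Dx ((b - 1) * (L - L')).
have p0 := expR_gt0 ((1-b) * L).
move=> H.
have H2 : (b-1) * y^-1 <= (b-1) * (L - L') by rewrite ler_pM2l //; lra.
have yi : 0 < y^-1 by rewrite invr_gt0.
set E := expR ((1-b) * L) in p0 H *.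
set F := expR ((b-1) * (L-L')) in H *.
have : E * ((b-1) * y^-1) <= E * (F - 1) by rewrite ler_pM2l //; lra.
rewrite mulrC -mulrA mulrC. move=> H3.
have -> : E * F - E = E * (F - 1) by ring.
by move: H3; rewrite [y^-1 * E]mulrC.
Qed.


Lemma powR_anti (e s t : R) : e <= 0 -> 0 < s -> s <= t -> t `^ e <= s `^ e.
Proof.
move=> e0 s0 st; have t0 : 0 < t := lt_le_trans s0 st.
rewrite !powR_expE // ler_expR.
have : ln s <= ln t by rewrite ler_ln ?posrE.
move=> h; rewrite ler_wnM2l //.
Qed.

Definition gt (b t : R) := t `^ (1-b) / (b-1).

Lemma tail_sum (b x : R) K : 1 < b -> 1 < x ->
  \sum_(0 <= Q < K) (if x < Q%:R then (Q%:R) `^ (-b) else 0) <= (x-1) `^ (1-b) / (b-1).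
Proof.
move=> b1 x1.
have k0 : 0 < b - 1 by lra.
have gdec s t : 0 < s -> s <= t -> gt b t <= gt b s.
  move=> s0 st; rewrite /gt ler_pM2r ?invr_gt0 //; apply: powR_anti => //; lra.
have g0 t : 0 <= gt b t by rewrite /gt divr_ge0 ?powR_ge0 // ltW.
suff H : \sum_(0 <= Q < K) (if x < Q%:R then (Q%:R) `^ (-b) else 0) <=
   (if x < K%:R then gt b (x-1) - gt b (K%:R - 1) else 0).
  apply: (le_trans H); case: ifP => _; last exact: g0.
  by rewrite /gt lerBlDr lerDl g0.
elim: K => [|K IH]; first by rewrite big_geq // ifF //; apply/negbTE; rewrite -leNgt; lra.
rewrite big_nat_recr //=.
case: (ltrP x K%:R) => hK.
- have -> : x < K.+1%:R by rewrite (lt_le_trans hK) // ler_nat.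
  have K1 : 1 < (K%:R : R) := lt_trans x1 hK.
  have := @pow_tele b K%:R b1 K1.

  rewrite -/(gt b (K%:R - 1)) -/(gt b K%:R) (_ : K.+1%:R - 1 = K%:R :> R); last first.
    by rewrite -natr1 addrK.
  move=> h; rewrite /gt hK mulrBl in h IH *. lra.
- have hK' : (x < K%:R) = false by rewrite ltNge hK.
  rewrite hK' addr0 in IH *.
  case: ifP => hK1.
    apply: (le_trans IH); rewrite subr_ge0 gdec //; first lra.
    by rewrite -natr1 addrK; lra.
  exact: IH.
Qed.
End Tail.

Section Bounds.
Variable R : realType.
Variable tau : R.
Hypothesis htau : 7 / 2 <= tau.

Lemma powR1D (x e : R) : 0 < x -> x * x `^ e = x `^ (1 + e).
Proof. have ht := htau.
move=> x0; rewrite powRD; last by apply/implyP => _; rewrite gt_eqF.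
by rewrite powRr1 // ltW.
Qed.

Lemma pow_half (Q : R) : 4 <= Q -> Q * Q * Q `^ (1 - tau) <= 2^-1.
Proof. have ht := htau.
move=> Q4; have Q0 : 0 < Q by lra.
rewrite -mulrA !powR1D //.
have -> : 1 + (1 + (1 - tau)) = 3 - tau by ring.
apply: (@le_trans _ _ (4 `^ (3 - tau))).
  apply: powR_anti => //; lra.
apply: (@le_trans _ _ (4 `^ (- 2^-1))).
  apply: ler_powR; lra.
rewrite powRN powR12_sqrt; last lra.
have -> : (4 : R) = 2 ^+ 2 by rewrite expr2; lra.
by rewrite sqrtr_sqr ger0_norm.
Qed.

Definition su (q Q : nat) : R := (q%:R) `^ (-(tau+1)) + (Q%:R) `^ (-(tau+1)).
Definition cz (q Q : nat) : R := su q Q + 2 * (Q%:R) `^ (1 - tau).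
Definition rr (q Q a : nat) : R := a%:R / (q%:R * Q%:R).
Definition cond (q Q a : nat) : bool :=
  [&& (4 <= q)%N, (q <= Q)%N, (0 < a)%N & rr q Q a < cz q Q / 2].
Definition wd (q Q a : nat) : R := if cond q Q a then rr q Q a / su q Q - rr q Q a / cz q Q else 0.

Lemma wd_bound q Q a : (4 <= q)%N -> (q <= Q)%N ->
  wd q Q a <= if (0 < a)%N && (a%:R < 2 * Q%:R * (q%:R) `^ (- tau))
               then 4 * (Q%:R) `^ (1 - tau) / (q%:R) `^ (-(tau+1)) else 0.
Proof. have ht := htau.
move=> q4 qQ; rewrite /wd.
set qr := (q%:R : R); set Qr := (Q%:R : R).
have q4r : 4 <= qr by rewrite /qr (ler_nat R 4 q).
have qQr : qr <= Qr by rewrite /qr /Qr ler_nat.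
have Q4r : 4 <= Qr by lra.
set u := qr `^ (-(tau+1)); set v := Qr `^ (-(tau+1)); set z := Qr `^ (1 - tau).
set t := qr `^ (- tau).
have u0 : 0 < u by apply: powR_gt0; lra.
have v0 : 0 < v by apply: powR_gt0; lra.
have z0 : 0 < z by apply: powR_gt0; lra.
have vu : v <= u by apply: powR_anti; lra.
have F3 : qr * u = t by rewrite /u powR1D; [congr powR; ring | lra].
have F5 := pow_half Q4r; rewrite -/z in F5.
have F4 : qr * Qr * z <= 2^-1.
  apply: le_trans F5; rewrite ler_pM2r // ler_pM2r //; lra.
case: ifP => hc; last first.
  case: ifP => // _; apply: divr_ge0; [apply: mulr_ge0; lra | lra].
case/and4P: hc => _ _ a0 hr.
rewrite /rr /cz /su -/qr -/Qr -/u -/v -/z in hr *.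
have qQ0 : 0 < qr * Qr by apply: mulr_gt0; lra.
set r := a%:R / (qr * Qr) in hr *.
have a1 : 1 <= (a%:R : R) by rewrite (ler_nat R 1 a).
have ha : a%:R < qr * Qr * (u + z).
  rewrite -ltr_pdivrMl // mulrC -/r; lra.
have ha' : a%:R < Qr * t + 2^-1.
  have -> : Qr * t = qr * Qr * u by rewrite -F3; ring.
  lra.
have hQt : 2^-1 < Qr * t by lra.
have ha2 : a%:R < 2 * Qr * t by lra.
rewrite a0 /= ha2.
have hr2 : r < 2 * u.
  rewrite /r ltr_pdivrMr // -F3 in ha2 *.
  have : 2 * Qr * (qr * u) = 2 * u * (qr * Qr) by ring.
  lra.
have s0 : 0 < u + v by lra.
have c0 : 0 < u + v + 2 * z by lra.
have r0 : 0 < r by rewrite /r divr_gt0 //; lra.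
have -> : r / (u + v) - r / (u + v + 2 * z) = 2 * r * z / ((u + v) * (u + v + 2 * z)).
  by field; apply/andP; split; rewrite gt_eqF.
rewrite ler_pdivrMr ?mulr_gt0 //.
have h1 : u * u <= (u + v) * (u + v + 2 * z) by nra.
have e : 4 * z / u * (u * u) = 4 * z * u by field; rewrite gt_eqF.
have W0 : 0 < 4 * z / u by rewrite divr_gt0 // mulr_gt0 //; lra.
have h3 : 4 * z / u * (u * u) <= 4 * z / u * ((u + v) * (u + v + 2 * z)) by rewrite ler_pM2l.
have h4 : 2 * r * z <= 4 * z * u by nra.
lra.
Qed.


Lemma count_sum (X C : R) K : 0 <= C ->
  \sum_(0 <= a < K) (if (0 < a)%N && (a%:R < X) then C else 0) <= (if 1 < X then X * C else 0).
Proof.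
move=> C0; case: ifP => X1; last first.
  rewrite big1 // => a _; case: ifP => // /andP[a0 aX].
  have : 1 <= (a%:R : R) by rewrite (ler_nat R 1 a).
  move: X1 => /negbT; rewrite -leNgt => X1 ha; lra.
suff : \sum_(0 <= a < K) (if (0 < a)%N && (a%:R < X) then C else 0) <= C * (K.-1)%:R /\
       \sum_(0 <= a < K) (if (0 < a)%N && (a%:R < X) then C else 0) <= X * C by case.
elim: K => [|K [IH1 IH2]]; first by rewrite big_geq //= mulr0; split => //; rewrite mulr_ge0 //; lra.
rewrite big_nat_recr //=.
case: ifP => hK.
  case/andP: hK => K0 KX.
  have e : C * (K.-1)%:R + C = C * K%:R.
    by rewrite -{2}(prednK K0) -natr1 mulrDr mulr1.
  case: (C =P 0) => [C00|Cn0]; first by subst C; rewrite !mul0r mulr0 addr0 in IH1 IH2 *; split.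
  have Cp : 0 < C by rewrite lt_def C0 andbT; apply/eqP.
  have hKX2 : C * K%:R <= X * C by rewrite mulrC ler_pM2r // ltW.
  split; lra.
rewrite addr0; split => //; apply: (le_trans IH1); rewrite ler_wpM2l // ler_nat; lia.
Qed.


Definition Wb (q Q : nat) : R :=
  if [&& (4 <= q)%N, (q <= Q)%N & (q%:R) `^ tau / 2 < Q%:R]
  then 8 * q%:R * (Q%:R) `^ (-(tau - 2)) else 0.

Lemma wsum q Q K : \sum_(0 <= a < K) wd q Q a <= Wb q Q.
Proof. have ht := htau.
rewrite /Wb; case: (boolP ((4 <= q)%N && (q <= Q)%N)) => hqQ; last first.
  rewrite ifF; last by apply/negbTE; move: hqQ; apply: contra => /and3P[-> ->].
  rewrite big1 // => a _; rewrite /wd /cond ifF //; apply/negbTE; move: hqQ; apply: contra.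
  by case/and4P => -> ->.
case/andP: hqQ => q4 qQ; rewrite q4 qQ /=.
set qr := (q%:R : R); set Qr := (Q%:R : R).
have q4r : 4 <= qr by rewrite /qr (ler_nat R 4 q).
have qQr : qr <= Qr by rewrite /qr /Qr ler_nat.
set u := qr `^ (-(tau+1)); set z := Qr `^ (1 - tau); set t := qr `^ (- tau).
have u0 : 0 < u by apply: powR_gt0; lra.
have z0 : 0 < z by apply: powR_gt0; lra.
have F3 : qr * u = t by rewrite /u powR1D; [congr powR; ring | lra].
apply: (@le_trans _ _ (\sum_(0 <= a < K)
   (if (0 < a)%N && (a%:R < 2 * Qr * t) then 4 * z / u else 0))).
  by apply: ler_sum => a _; apply: wd_bound.
apply: (le_trans (@count_sum _ _ _ _)).
  by rewrite divr_ge0 // ?mulr_ge0 //; lra.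
have tq : t = (qr `^ tau)^-1 by rewrite /t powRN.
have qt0 : 0 < qr `^ tau by apply: powR_gt0; lra.
have -> : (1 < 2 * Qr * t) = (qr `^ tau / 2 < Qr).
  by rewrite tq (ltr_pdivlMr _ _ qt0) mul1r [RHS]ltr_pdivrMr // mulrC.
case: ifP => // _.
have e1 : Qr * z = Qr `^ (-(tau - 2)).
  by rewrite /z powR1D; [congr powR; ring | lra].
rewrite -e1 -F3 le_eqVlt; apply/orP; left; apply/eqP; field; rewrite gt_eqF //.
Qed.


Definition bq : R := tau ^+ 2 - 3 * tau - 1.
Definition Cst : R := 8 * (4^-1) `^ (3 - tau) / (tau - 3).
Definition Vb (q : nat) : R := if (4 <= q)%N then Cst * (q%:R) `^ (- bq) else 0.

Lemma Qsum q K : \sum_(0 <= Q < K) Wb q Q <= Vb q.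
Proof. have ht := htau.
rewrite /Vb; case: ifP => q4; last first.
  by rewrite big1 // => Q _; rewrite /Wb q4.
set qr := (q%:R : R).
have q4r : 4 <= qr by rewrite /qr (ler_nat R 4 q).
set x := qr `^ tau / 2.
have qt : qr <= qr `^ tau by apply: le1r_powR; lra.
have x1 : 1 < x by rewrite /x; lra.
apply: (@le_trans _ _ (\sum_(0 <= Q < K)
   (8 * qr) * (if x < Q%:R then (Q%:R) `^ (- (tau - 2)) else 0))).
  apply: ler_sum => Q _; rewrite /Wb q4 /=.
  case: ifP => [/andP[_ ->]|_] //.
  case: ifP => _; rewrite ?mulr0 //; rewrite mulr_ge0 ?powR_ge0 //; lra.
rewrite -mulr_sumr.
have b1 : 1 < tau - 2 by lra.
have := @tail_sum R (tau - 2) x K b1 x1.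
have -> : 1 - (tau - 2) = 3 - tau by ring.
have -> : tau - 2 - 1 = tau - 3 by ring.
move=> h.
have q0 : 0 < 8 * qr by lra.
apply: (le_trans (ler_wpM2l (ltW q0) h)).
have t3 : 0 < tau - 3 by lra.
have y0 : 0 < qr `^ tau / 4 by lra.
have h2 : (x - 1) `^ (3 - tau) <= (qr `^ tau / 4) `^ (3 - tau).
  apply: powR_anti => //; rewrite /x; lra.
have e : (qr `^ tau / 4) `^ (3 - tau) = qr `^ (tau * (3 - tau)) * (4^-1) `^ (3 - tau).
  rewrite powRM ?powRrM //; lra.
have e2 : qr * qr `^ (tau * (3 - tau)) = qr `^ (- bq).
  by rewrite powR1D; [congr powR; rewrite /bq; ring | lra].
rewrite /Cst.
apply: (@le_trans _ _ (8 * qr * ((qr `^ tau / 4) `^ (3 - tau) / (tau - 3)))).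
  by rewrite ler_pM2l // ler_pM2r // invr_gt0.
rewrite e -e2 le_eqVlt; apply/orP; left; apply/eqP; field; rewrite gt_eqF //.
Qed.

Lemma bq_gt1 : (3 + Num.sqrt 17) / 2 < tau -> 1 < bq.
Proof.
move=> h; rewrite /bq.
have s0 := sqrtr_ge0 (17 : R).
have s2 : Num.sqrt (17 : R) ^+ 2 = 17 by rewrite sqr_sqrtr.
have h' : Num.sqrt 17 < 2 * tau - 3 by lra.
rewrite expr2 in s2 *; nra.
Qed.

Lemma qsum K : (3 + Num.sqrt 17) / 2 < tau ->
  \sum_(0 <= q < K) Vb q <= Cst * ((3 - 1) `^ (1 - bq) / (bq - 1)).
Proof. have ht := htau.
move=> h; have b1 := bq_gt1 h.
have C0 : 0 <= Cst.
  by rewrite /Cst divr_ge0 ?mulr_ge0 ?powR_ge0 //; lra.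
apply: (@le_trans _ _ (\sum_(0 <= q < K) Cst * (if 3 < q%:R then (q%:R) `^ (- bq) else 0))).
  apply: ler_sum => q _; rewrite /Vb; case: ifP => q4.
    by rewrite ifT ?lexx // ltr_nat.
  by rewrite ifF ?mulr0 ?lexx //; apply/negbTE; rewrite ltr_nat q4.
rewrite -mulr_sumr ler_wpM2l //.
have x1 : (1 : R) < 3 by lra.
exact: (@tail_sum R bq 3 K b1 x1).
Qed.

End Bounds.

Section Meas.
Variable R : realType.
Variable tau : R.
Hypothesis htau : 7 / 2 <= tau.

Local Notation mu := (@lebesgue_measure R).

Lemma series_bound (f : nat -> R) M : (forall n, 0 <= f n) ->
  (forall K, \sum_(0 <= n < K) f n <= M) -> (\sum_(n <oo) (f n)%:E <= M%:E)%E.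
Proof.
move=> f0 hK; apply: lime_le.
  by apply: is_cvg_nneseries => n _ _; rewrite lee_fin.
by apply: nearW => K; rewrite sumEFin lee_fin.
Qed.

Definition Bs (q Q a : nat) : set R :=
  if cond tau q Q a then `[@rr R q Q a / cz tau q Q, @rr R q Q a / su tau q Q[%classic else set0.

Lemma Bs_meas q Q a : measurable (Bs q Q a).
Proof. by rewrite /Bs; case: ifP => _; [exact: measurable_itv | exact: measurable0]. Qed.

Lemma wd_ge0 q Q a : 0 <= wd tau q Q a.
Proof.
rewrite /wd; case: ifP => // /and4P[q4 _ a0 _].
have q0 : 0 < (q%:R : R) by rewrite ltr0n; lia.
have Q0 : 0 <= (Q%:R : R) by [].
have s0 : 0 < su tau q Q.
  rewrite /su; have := powR_ge0 (Q%:R : R) (-(tau+1)); have := powR_gt0 (-(tau+1)) q0; lra.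
have z0 : 0 <= 2 * (Q%:R : R) `^ (1 - tau) by rewrite mulr_ge0 // powR_ge0.
have r0 : 0 <= @rr R q Q a by rewrite /rr divr_ge0 // mulr_ge0.
rewrite subr_ge0 /cz ler_wpM2l // lef_pV2 ?posrE //; lra.
Qed.

Lemma muBs q Q a : (mu (Bs q Q a) <= (wd tau q Q a)%:E)%E.
Proof.
rewrite /Bs /wd; case: ifP => hc; last by rewrite measure0.
rewrite lebesgue_measure_itv /=; case: ifP => _.
  by rewrite -EFinB lee_fin.
have := wd_ge0 q Q a; rewrite /wd hc => h; by rewrite lee_fin.
Qed.

Lemma Wb_ge0 q Q : 0 <= Wb tau q Q.
Proof.
rewrite /Wb; case: ifP => _; rewrite ?mulr_ge0 ?powR_ge0 //.
Qed.

Lemma Vb_ge0 q : 0 <= Vb tau q.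
Proof.
have ht := htau.
rewrite /Vb /Cst; case: ifP => // _.
by rewrite mulr_ge0 ?powR_ge0 // divr_ge0 ?mulr_ge0 ?powR_ge0 //; lra.
Qed.

Definition Gq q Q : set R := \bigcup_a Bs q Q a.
Definition Fq q : set R := \bigcup_Q Gq q Q.

Lemma Gq_meas q Q : measurable (Gq q Q).
Proof. by apply: bigcupT_measurable => a; exact: Bs_meas. Qed.
Lemma Fq_meas q : measurable (Fq q).
Proof. by apply: bigcupT_measurable => Q; exact: Gq_meas. Qed.

Lemma muG q Q : (mu (Gq q Q) <= (Wb tau q Q)%:E)%E.
Proof.
apply: le_trans (measure_sigma_subadditive mu (fun a => Bs_meas q Q a) (Gq_meas q Q) (@subset_refl _ _)) _.
apply: le_trans (lee_nneseries _ (fun a _ => muBs q Q a)) _.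
  by move=> n _ _; exact: measure_ge0.
apply: series_bound; first exact: wd_ge0.
by move=> K; apply: wsum.
Qed.

Lemma muF q : (mu (Fq q) <= (Vb tau q)%:E)%E.
Proof.
apply: le_trans (measure_sigma_subadditive mu (fun Q => Gq_meas q Q) (Fq_meas q) (@subset_refl _ _)) _.
apply: le_trans (lee_nneseries _ (fun Q _ => muG q Q)) _.
  by move=> n _ _; exact: measure_ge0.
apply: series_bound; first exact: Wb_ge0.
by move=> K; apply: Qsum.
Qed.

Lemma muLim : (3 + Num.sqrt 17) / 2 < tau -> mu (lim_sup_set Fq) = 0%E.
Proof.
move=> h; apply: lim_sup_set_cvg0; first exact: Fq_meas.
apply: (@le_lt_trans _ _ (Cst tau * ((3 - 1) `^ (1 - bq tau) / (bq tau - 1)))%:E); last exact: ltry.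
apply: le_trans (lee_nneseries _ (fun q _ => muF q)) _.
  by move=> n _ _; exact: measure_ge0.
apply: series_bound; first exact: Vb_ge0.
by move=> K; apply: qsum.
Qed.

End Meas.


Lemma core (R : realType) (tau g alpha : R) n k : 7 / 2 <= tau -> 0 < g < 2^-1 ->
  0 < alpha < 1 -> (forall j, (n <= j)%N -> ~ Fq tau j g) -> (maxn n 4 <= k)%N -> ~~ odd k ->
    (cf_p alpha k)%:R / (cf_q alpha k)%:R +
    g / (cf_q alpha k)%:R `^ (tau + 1) <
    (cf_p alpha k.+2)%:R / (cf_q alpha k.+2)%:R -
    g / (cf_q alpha k.+2)%:R `^ (tau + 1) <->
    (cf_p alpha k)%:R / (cf_q alpha k)%:R +
    g / (cf_q alpha k)%:R `^ (tau + 1) <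
    (cf_p alpha k.+2)%:R / (cf_q alpha k.+2)%:R -
    g / (cf_q alpha k.+2)%:R `^ (tau + 1) -
    2 * g / (cf_q alpha k.+2)%:R `^ (tau - 1).
Proof.
move=> ht /andP[g0 g1] ha hn hk ev.
have Cc0 : 0 <= 2 * g / (cf_q alpha k.+2)%:R `^ (tau - 1).
  by rewrite divr_ge0 ?powR_ge0 // mulr_ge0 //; lra.
split; last by move=> h; lra.
move=> hA; case: (ltrP _ (_ - _ - _)) => // hB; exfalso.
have Ad := @cf_diff2 R alpha k ev.
have pSS := @cf_pSS R alpha k; have qSS := @cf_qSS R alpha k.
set a := cf_a alpha k.+2 in Ad pSS qSS.
case: (eqVneq a 0%N) => a0.
  move: hA; rewrite pSS qSS a0 !mul0n !add0n.
  have := powR_ge0 ((cf_q alpha k)%:R) (tau + 1).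
  move=> h; have : 0 <= g / (cf_q alpha k)%:R `^ (tau + 1) by rewrite divr_ge0 //; lra.
  lra.
have hall := @cf_a_all R alpha k ha a0.
have hall' : forall j, (1 <= j <= k.+1)%N -> (1 <= cf_a alpha j)%N.
  by move=> j /andP[j1 j2]; apply: hall; rewrite j1 /=; lia.
have [hk1 [hk2 _]] := @cf_q_grow R alpha k hall'.
set q := cf_q alpha k in Ad qSS hk1 hk2 hA hB Cc0.
set Q := cf_q alpha k.+2 in Ad qSS hA hB Cc0.
set p := cf_p alpha k in Ad hA hB.
set P := cf_p alpha k.+2 in Ad hA hB.
have q4 : (4 <= q)%N by lia.
have qQ : (q <= Q)%N by rewrite qSS; lia.
have qn : (n <= q)%N by lia.
apply: (hn q qn).
exists Q => //; exists a => //.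
set qr := (q%:R : R) in hA hB Ad *; set Qr := (Q%:R : R) in hA hB Ad *.
have q4r : 4 <= qr by rewrite /qr (ler_nat R 4 q).
have qQr : qr <= Qr by rewrite /qr /Qr ler_nat.
set pr := (p%:R : R) in hA hB Ad; set Pr := (P%:R : R) in hA hB Ad.
have eu : g / qr `^ (tau + 1) = g * qr `^ (- (tau + 1)) by rewrite powRN.
have ev' : g / Qr `^ (tau + 1) = g * Qr `^ (- (tau + 1)) by rewrite powRN.
have ez : 2 * g / Qr `^ (tau - 1) = 2 * g * Qr `^ (1 - tau).
  by rewrite (_ : 1 - tau = - (tau - 1)) ?powRN //; ring.
rewrite eu ev' ez in hA hB.
have er : Pr / Qr - pr / qr = @rr R q Q a.
  rewrite /rr -/qr -/Qr -Ad; field; apply/andP; split; rewrite gt_eqF //; lra.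
set u := qr `^ (- (tau + 1)) in hA hB; set v := Qr `^ (- (tau + 1)) in hA hB.
set z := Qr `^ (1 - tau) in hA hB.
have u0 : 0 < u by apply: powR_gt0; lra.
have v0 : 0 < v by apply: powR_gt0; lra.
have z0 : 0 < z by apply: powR_gt0; lra.
have hA' : g * (u + v) < @rr R q Q a by rewrite -er; lra.
have hB' : @rr R q Q a <= g * (u + v + 2 * z) by rewrite -er; lra.
have hs : su tau q Q = u + v by [].
have hc : cz tau q Q = u + v + 2 * z by [].
have c0 : 0 < u + v + 2 * z by lra.
have s0 : 0 < u + v by lra.
have hcond : cond tau q Q a.
  rewrite /cond q4 qQ lt0n a0 hc /=.
  have : g * (u + v + 2 * z) < 2^-1 * (u + v + 2 * z) by rewrite ltr_pM2r.
  lra.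
rewrite /Bs hcond /= in_itv /= hs hc.
rewrite ler_pdivrMr // ltr_pdivlMr //.
by rewrite hB' hA'.
Qed.

Unset Implicit Arguments.

Theorem lemma7 (R : realType) (tau : R) :
  (3 + Num.sqrt 17) / 2 < tau ->
  {ae (@lebesgue_measure R), forall gamma : R,
     gamma \in `]0, 2^-1[ ->
     forall alpha : R, Dgt gamma tau alpha ->
       exists N : nat, forall n : nat, (N <= n)%N -> ~~ odd n ->
         let pn := (cf_p alpha n)%:R in
         let qn := (cf_q alpha n)%:R in
         let pn2 := (cf_p alpha n.+2)%:R in
         let qn2 := (cf_q alpha n.+2)%:R in
         (pn / qn + gamma / qn `^ (tau + 1) < pn2 / qn2 - gamma / qn2 `^ (tau + 1)
          <->
          pn / qn + gamma / qn `^ (tau + 1)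
            < pn2 / qn2 - gamma / qn2 `^ (tau + 1) - 2 * gamma / qn2 `^ (tau - 1))}.
Proof.
move=> htau'.
have ht : 7 / 2 <= tau.
  have s0 := sqrtr_ge0 (17 : R).
  have s2 : Num.sqrt (17 : R) ^+ 2 = 17 by rewrite sqr_sqrtr.
  rewrite expr2 in s2; nra.
exists (lim_sup_set (Fq tau)); split.
- apply: bigcapT_measurable => n; apply: bigcup_measurable => j _; exact: Fq_meas.
- exact: muLim.
move=> g /= nP; apply: contrapT => nL; apply: nP.
have [n hn] : exists n, forall j, (n <= j)%N -> ~ Fq tau j g.
  apply: contrapT => H; apply: nL => n _; apply: contrapT => H2; apply: H.
  by exists n => j nj Fj; apply: H2; exists j.
move=> hg; have hg' : (g : R) \in `]0, 2^-1[ := hg.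
move: hg'; rewrite ?inE /= ?in_itv /= => /andP[g0 g1] alpha [ha _].
exists (maxn n 4) => k hk ev.
by apply: (core ht _ ha hn hk ev); rewrite g0 g1.
Qed.
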